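(* Let $T$ be a standard Young tableau with distinct positive integer entries, and let $s$ be an entry of $T$. Let $r<s$ be an integer such that no entry of $T$ lies in the open interval $(r,s)$, and let $k$ be a positive integer with $k\leq s-r$. Choose $k-1$ integers $r<r_1<\cdots<r_{k-1}<s$, and let $T'$ be the tableau obtained from $T$ by column inserting $r_{k-1},r_{k-2},\dots,r_1$ in that order. Then: (1) $c_{T'}(r_i)=i$ for $1\le i\le k-1$, and $c_{T'}(s)=m$, where $m=\max\{c_T(s),k\}$; (2) if $s'$ is an entry of $T$ with $s'>s$, then either $c_{T'}(s')=c_T(s')$ or $c_{T'}(s')\leq m+n$, where $m$ is as in (1) and $n$ is the number of entries of $T$ lying in the half-open interval $[s,s')$.
   Context: For a tableau $T$ and an entry $a$ of $T$, $c_T(a)$ denotes the index of the column of $T$ containing $a$ (columns numbered from $1$ starting on the left). Column insertion of a number $a$ into a tableau: place $a$ in the first column, bumping the smallest entry of that column larger than $a$ (if any); the bumped entry is then inserted into the second column in the same way, and so on, until an entry is placed at the bottom of a column without bumping. *)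

(* Defs.v *)
From mathcomp Require Import all_boot all_order all_algebra.
Set Implicit Arguments. Unset Strict Implicit. Unset Printing Implicit Defensive.
Import Order.TTheory GRing.Theory Num.Theory.
Local Open Scope ring_scope.

(* A tableau is the list of its columns (left to right); each column lists
   its entries from top to bottom. *)
Definition tableau := seq (seq int).

Definition entries (T : tableau) : seq int := flatten T.

Definition is_SYT (T : tableau) : Prop :=
  [/\ all (fun c => c != [::]) T,
      sorted geq (map size T),
      all (fun c : seq int => sorted (fun x y : int => x < y) c) T,
      (forall j i : nat, (j.+1 < size T)%N -> (i < size (nth [::] T j.+1))%N ->
          nth 0 (nth [::] T j) i < nth 0 (nth [::] T j.+1) i) &
      uniq (entries T) /\ all (fun x : int => 0 < x) (entries T)].

(* c_T(a): 1-based index of the column of T containing a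
   (equals (size T).+1 when a is not an entry). *)
Definition col_of (T : tableau) (a : int) : nat :=
  (find (fun c => a \in c) T).+1.

Fixpoint col_insert (a : int) (T : tableau) : tableau :=
  match T with
  | [::] => [:: [:: a]]
  | c :: T' =>
      let i := find (fun x => a < x) c in
      if (i < size c)%N then set_nth 0 c i a :: col_insert (nth 0 c i) T'
      else rcons c a :: T'
  end.

Definition col_insert_seq (T : tableau) (s : seq int) : tableau :=
  foldl (fun U a => col_insert a U) T s.

(* Main.v *)
Require Import Defs.
From mathcomp Require Import all_boot all_order all_algebra zify.
Import Order.TTheory GRing.Theory Num.Theory.
Local Open Scope ring_scope.
Set Implicit Arguments. Unset Strict Implicit.

Lemma mem_set_nth_ne (c : seq int) i (a z : int) :
  (i < size c)%N -> z != a -> z != nth 0 c i -> (z \in set_nth 0 c i a) = (z \in c).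
Proof.
elim: c i => [|h t IH] [|i] //= Hi Ha Hb.
  by rewrite !inE (negbTE Ha) (negbTE Hb).
by rewrite !inE IH.
Qed.

Lemma mem_set_nth_inv (c : seq int) i (a z : int) :
  (i < size c)%N -> z \in set_nth 0 c i a -> z = a \/ z \in c.
Proof.
move=> Hi Hz; case: (eqVneq z a) => [->|Ha]; first by left.
case: (eqVneq z (nth 0 c i)) => [->|Hb]; first by right; apply: mem_nth.
by right; rewrite -(mem_set_nth_ne Hi Ha Hb).
Qed.

Lemma perm_set_nth (c : seq int) i (a : int) :
  (i < size c)%N -> perm_eq (nth 0 c i :: set_nth 0 c i a) (a :: c).
Proof.
elim: c i => [|h t IH] [|i] //= Hi.
  by rewrite (perm_catCA [:: h] [:: a] t).
rewrite (perm_catCA [:: nth 0 t i] [:: h]) /= perm_sym (perm_catCA [:: a] [:: h]) /=.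
by rewrite perm_cons perm_sym IH.
Qed.

Lemma entries_col_insert a U : perm_eq (entries (col_insert a U)) (a :: entries U).
Proof.
elim: U a => [|c U IH] a //=.
case: ifP => Hi /=.
  rewrite /entries /=; set i := find _ c.
  apply: (@perm_trans _ (set_nth 0 c i a ++ nth 0 c i :: entries U)); first by rewrite perm_cat2l IH.
  rewrite (perm_catCA _ [:: _]) /=.
  by rewrite -(cat_cons a) -cat_cons perm_cat2r perm_set_nth.
by rewrite /entries /= -(cat_cons a) perm_cat2r perm_rcons.
Qed.

Lemma mem_head_insert a U : a \in nth [::] (col_insert a U) 0.
Proof.
case: U => [|c U] /=; first by rewrite inE.
case: ifP => Hi /=; last by rewrite mem_rcons inE eqxx.
apply/(nthP 0); exists (find (fun x => a < x) c); first by rewrite size_set_nth leq_max Hi orbT.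
by rewrite nth_set_nth /= eqxx.
Qed.

Lemma col_of_uniq U y j : uniq (entries U) -> y \in nth [::] U j -> col_of U y = j.+1.
Proof.
rewrite /col_of; elim: U j => [|c U IH] [|j] //= Hu Hy; first by rewrite Hy.
rewrite /entries /= cat_uniq in Hu; case/and3P: Hu => _ Hd Hu.
have Hin : y \in flatten U.
  by apply/flattenP; exists (nth [::] U j) => //; apply: mem_nth; case: (ltnP j (size U)) Hy => // H; rewrite nth_default.
have -> : (y \in c) = false by apply/negP => Hc; move/hasP: Hd; apply; exists y.
by rewrite (IH j).
Qed.

Lemma mem_entries U y j : y \in nth [::] U j -> y \in entries U.
Proof.
move=> Hy; apply/flattenP; exists (nth [::] U j) => //; apply: mem_nth.
by case: (ltnP j (size U)) Hy => // H; rewrite nth_default.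
Qed.


Lemma find_lt_nth (c : seq int) (a : int) :
  (find (fun x => (a < x)%R) c < size c)%N -> a < nth 0 c (find (fun x => a < x) c).
Proof. by move=> H; apply: (nth_find 0 (a := fun x => a < x)); rewrite has_find. Qed.

Lemma colB U a z : z \in entries U -> z < a -> col_of (col_insert a U) z = col_of U z.
Proof.
rewrite /col_of; elim: U a => [|c U IH] a //= Hz Hza.
case: ifP => Hi /=.
  set i := find _ c in Hi *.
  have Hb := find_lt_nth Hi.
  rewrite mem_set_nth_ne //; last 2 first.
  - by rewrite lt_eqF.
  - by rewrite lt_eqF // (lt_trans Hza Hb).
  case: ifP => // Hzc; rewrite IH //; last by rewrite (lt_trans Hza Hb).
  by move: Hz; rewrite /entries /= mem_cat Hzc.
rewrite mem_rcons inE lt_eqF //=.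
Qed.

Lemma posB U a z j : z \in nth [::] U j -> z < a -> z \in nth [::] (col_insert a U) j.
Proof.
elim: U a j => [|c U IH] a j /=; first by rewrite nth_nil.
move=> Hz Hza; case: ifP => Hi /=.
  set i := find _ c in Hi *.
  have Hb := find_lt_nth Hi.
  case: j Hz => [|j] /= Hz; last by apply: IH => //; rewrite (lt_trans Hza Hb).
  rewrite mem_set_nth_ne //; first by rewrite lt_eqF.
  by rewrite lt_eqF // (lt_trans Hza Hb).
by case: j Hz => [|j] //= Hz; rewrite mem_rcons inE Hz orbT.
Qed.

Lemma colA U a z : z \in entries U -> a < z ->
  col_of (col_insert a U) z = col_of U z \/
  (col_of (col_insert a U) z <= (count (fun y => (a < y)%R && (y < z)%R) (entries U)).+2)%N.
Proof.
elim: U a => [|c U IH] a //= Hz Haz.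
case: ifP => Hi /=.
  set i := find _ c in Hi *.
  set b := nth 0 c i.
  have Hab : a < b by apply: find_lt_nth.
  have Hbc : b \in c by apply: mem_nth.
  rewrite /col_of /=.
  case: ifP => Hzs.
    left; case: (mem_set_nth_inv Hi Hzs) => [Hza|->] //.
    by move: Haz; rewrite Hza ltxx.
  case: ifP => Hzc.
    have Hzb : z = b.
      apply/eqP; apply: contraFT Hzs => Hzb; rewrite mem_set_nth_ne //.
      by rewrite gt_eqF.
    subst z; right.
    have := col_of_uniq (U := col_insert b U) (y := b) (j := 0).
    rewrite /col_of => H.
    have -> : find (fun c0 => b \in c0) (col_insert b U) = 0%N.
      by case: (col_insert b U) (mem_head_insert b U) => //= c0 U0 ->.
    by [].
  have HzU : z \in entries U by move: Hz; rewrite /entries /= mem_cat Hzc.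
  case: (ltgtP b z) => Hbz.
  - case: (IH b HzU Hbz) => [H|H]; [left; rewrite /col_of in H; by rewrite H|right].
    rewrite /col_of in H; rewrite ltnS (leq_trans H) // /entries /= count_cat.
    rewrite ltnS -add1n leq_add //.
      by rewrite -has_count; apply/hasP; exists b => //; rewrite Hab Hbz.
    by apply: sub_count => y /andP[Hy1 Hy2]; rewrite Hy2 (lt_trans Hab Hy1).
  - by left; have := colB HzU Hbz; rewrite /col_of => ->.
  - by move: Hzc; rewrite -Hbz Hbc.
left; rewrite /col_of /= mem_rcons inE gt_eqF //.
Qed.


Definition ltz := (fun x y : int => x < y).

Lemma ltz_trans : transitive ltz.
Proof. by move=> x y z; apply: lt_trans. Qed.

Lemma find_sorted (c : seq int) (p : pred int) y :
  sorted ltz c -> y \in c -> p y -> (forall e, e \in c -> e < y -> ~~ p e) ->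
  find p c = index y c.
Proof.
elim: c => [|h t IH] //= Hs Hy Hp He.
case: (eqVneq h y) => [->|Hhy]; first by rewrite Hp.
have Hyt : y \in t by move: Hy; rewrite inE eq_sym (negbTE Hhy).
have Hhy' : h < y by have := order_path_min ltz_trans Hs => /allP; apply.
rewrite (negbTE (He h (mem_head _ _) Hhy')) IH //.
- by apply: path_sorted Hs.
- by move=> e Het; apply: He; rewrite inE Het orbT.
Qed.

Lemma sorted_set_nth (c : seq int) (a : int) :
  sorted ltz c -> (find (fun x => (a < x)%R) c < size c)%N -> a \notin c ->
  sorted ltz (set_nth 0 c (find (fun x => a < x) c) a).
Proof.
elim: c => [|h t IH] //= Hs Hi Ha.
rewrite inE negb_or in Ha; case/andP: Ha => Hah Hat.
case: ifP => Hlt /=.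
  by apply: (path_le ltz_trans Hlt).
have Hha : h < a by rewrite lt_neqAle eq_sym Hah /= leNgt Hlt.
have Hst := path_sorted Hs.
rewrite Hlt ltnS in Hi.
have := IH Hst Hi Hat.
case Et: t Hs Hi Hat Hst => [|h2 t2] //= Hs Hi Hat Hst.
case: ifP => Hlt2 /=.
  by move=> H; rewrite /ltz Hha H.
by move=> H; case/andP: Hs => Hh2 _; rewrite Hh2 H.
Qed.

Lemma sorted_rcons (c : seq int) (a : int) :
  sorted ltz c -> (size c <= find (fun x => (a < x)%R) c)%N -> a \notin c ->
  sorted ltz (rcons c a).
Proof.
case: c => [|h t] //= Hs Hi Ha.
rewrite rcons_path Hs /=.
have Hn : ~~ has (fun x => a < x) (h :: t) by rewrite has_find -leqNgt.
have Hl : last h t \in h :: t by apply: mem_last.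
have H1 : ~~ (a < last h t) by apply: contra Hn => H; apply/hasP; exists (last h t).
rewrite /ltz lt_neqAle leNgt H1 andbT.
by apply: contraNneq Ha => <-.
Qed.

Lemma sorted_insert U a : all (sorted ltz) U -> uniq (a :: entries U) ->
  all (sorted ltz) (col_insert a U).
Proof.
elim: U a => [|c U IH] a //= Hs Hu.
case/andP: Hs => Hc HU.
case/andP: Hu => Ha; rewrite /entries /= cat_uniq => /and3P[Huc Hd HuU].
rewrite mem_cat negb_or in Ha; case/andP: Ha => Hac HaU.
case: ifP => Hi /=.
  rewrite sorted_set_nth //=; apply: IH => //=; rewrite HuU andbT.
  by apply: contra Hd => H; apply/hasP; exists (nth 0 c (find (fun x => a < x) c)) => //; apply: mem_nth.
by rewrite sorted_rcons // ?HU // leqNgt Hi.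
Qed.


Lemma path_mem_lt (x : int) ys e : path ltz x ys -> e \in ys -> x < e.
Proof. by move=> Hp He; have /allP := order_path_min ltz_trans Hp; apply. Qed.

Lemma path_last_le (x : int) ys e : path ltz x ys -> e \in x :: ys -> e <= last x ys.
Proof.
elim: ys x e => [|y ys IH] x e /=; first by rewrite inE => _ /eqP ->.
case/andP=> Hxy Hp; rewrite inE => /orP[/eqP ->|He].
  have H1 : y <= last y ys by apply: IH; rewrite ?mem_head.
  have H2 : x < y := Hxy.
  by rewrite (le_trans (ltW H2) H1).
by apply: IH.
Qed.

Lemma chainC (x : int) ys U :
  path ltz x ys ->
  all (sorted ltz) U ->
  (forall j, (j < size ys)%N -> nth 0 ys j \in nth [::] U j) ->
  (forall e, e \in entries U -> e <= x \/ e \in ys \/ last x ys < e) ->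
  (forall j, (j < size ys)%N -> nth 0 (x :: ys) j \in nth [::] (col_insert x U) j) /\
  drop (size ys) (col_insert x U) = col_insert (last x ys) (drop (size ys) U).
Proof.
elim: ys x U => [|y ys IH] x U Hp Hs H3 H4; first by split => //; rewrite !drop0.
case: U Hs H3 H4 => [|c U] Hs H3 H4; first by have := H3 0%N isT; rewrite nth_nil.
have Hy : y \in c := H3 0%N isT.
case/andP: Hp => Hxy Hp.
case/andP: Hs => Hc HU.
have Hf : find (fun e => x < e) c = index y c.
  apply: find_sorted => // e Hec Hey.
  have : e \in entries (c :: U) by rewrite /entries /= mem_cat Hec.
  case/H4 => [He|[He|He]]; first by rewrite -leNgt.
    rewrite inE in He; case/orP: He => [/eqP Hey'|He]; first by move: Hey; rewrite Hey' ltxx.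
    by have := path_mem_lt Hp He; rewrite ltNge (ltW Hey).
  have := path_last_le Hp (mem_head y ys); rewrite /= in He.
  by move=> H; have := lt_trans (lt_le_trans Hey H) He; rewrite ltxx.
have Hi : (index y c < size c)%N by rewrite index_mem.
have H4' : forall e, e \in entries U -> e <= y \/ e \in ys \/ last y ys < e.
  move=> e He; have : e \in entries (c :: U) by rewrite /entries /= mem_cat He orbT.
  case/H4 => [H|[H|H]].
  - by left; apply: le_trans H (ltW (Hxy : x < y)).
  - by rewrite inE in H; case/orP: H => [/eqP ->|H]; [left | right; left].
  - by right; right.
have [IH1 IH2] := IH y U Hp HU (fun j Hj => H3 j.+1 Hj) H4'.
rewrite /= Hf Hi nth_index //; split.
  case=> [|j] Hj /=; first by apply/(nthP 0); exists (index y c); rewrite ?size_set_nth ?nth_set_nth /= ?eqxx // leq_max Hi orbT.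
  by apply: IH1.
by [].
Qed.


Lemma Tp_cons T x rs : col_insert_seq T (rev (x :: rs)) = col_insert x (col_insert_seq T (rev rs)).
Proof. by rewrite /col_insert_seq rev_cons foldl_rcons. Qed.

Lemma perm_Tp T rs : perm_eq (entries (col_insert_seq T (rev rs))) (rs ++ entries T).
Proof.
elim: rs => [|x rs IH] //=; rewrite Tp_cons.
by apply: perm_trans (entries_col_insert _ _) _; rewrite perm_cons.
Qed.

Lemma count_sub_in (p q : pred int) s : {in s, forall y, p y -> q y} -> (count p s <= count q s)%N.
Proof.
elim: s => [|h t IH] //= H.
apply: leq_add; last by apply: IH => y Hy; apply: H; rewrite inE Hy orbT.
by case: (p h) (H h (mem_head _ _)) => //= ->.
Qed.

Lemma inv2 T s r s' (Hgap : forall x, x \in entries T -> ~~ ((r < x) && (x < s))) rs :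
  path ltz r (rcons rs s) -> s' \in entries T -> s < s' ->
  col_of (col_insert_seq T (rev rs)) s' = col_of T s' \/
  (col_of (col_insert_seq T (rev rs)) s' <=
     (size rs).+1 + count (fun x => (s <= x)%R && (x < s')%R) (entries T))%N.
Proof.
move=> + Hs' Hss'; elim: rs => [|x rs IH]; first by left.
rewrite /= => /andP[Hrx Hp'].
have := IH (path_le ltz_trans Hrx Hp').
rewrite Tp_cons; set U := col_insert_seq T (rev rs) => IH'.
move: Hp'; rewrite rcons_path => /andP[Hpx Hls].
have Hxl : x <= last x rs := path_last_le Hpx (mem_head _ _).
have Hxs : x < s' := le_lt_trans Hxl (lt_trans Hls Hss').
have HsU : s' \in entries U by rewrite (perm_mem (perm_Tp T rs)) mem_cat Hs' orbT.
case: (colA HsU Hxs) => [->|H].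
  by case: IH' => [H|H]; [left | right; apply: (leq_trans H); rewrite leq_add2r].
right; apply: (leq_trans H).
rewrite (permP (perm_Tp T rs)) count_cat /=.
have Hc1 := count_size (fun y => (x < y) && (y < s')) rs.
suff Hc2 : (count (fun y => (x < y)%R && (y < s')%R) (entries T) <=
            count (fun x => (s <= x)%R && (x < s')%R) (entries T))%N.
  by rewrite !addSn !ltnS leq_add.
  apply: count_sub_in => y Hy /andP[Hxy Hys'].
  rewrite Hys' andbT leNgt; apply: contraT; rewrite negbK => Hys.
  have := Hgap y Hy; rewrite Hys andbT.
  have Hrx' : r < x := Hrx.
  by rewrite (lt_trans Hrx' Hxy).
Qed.


Lemma col_of_mem T s : s \in entries T -> s \in nth [::] T (col_of T s).-1.
Proof.
move=> Hs; rewrite /col_of /=.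
have Hh : has (fun c => s \in c) T.
  by case/flattenP: Hs => c Hc Hsc; apply/hasP; exists c.
exact: (nth_find [::] Hh).
Qed.

Lemma inv1 T s r (Hu0 : uniq (entries T)) (Hs0 : all (sorted ltz) T)
  (Hs : s \in entries T) (Hgap : forall x, x \in entries T -> ~~ ((r < x) && (x < s))) rs :
  path ltz r (rcons rs s) ->
  [/\ uniq (entries (col_insert_seq T (rev rs))),
      all (sorted ltz) (col_insert_seq T (rev rs)),
      (forall j, (j < size rs)%N -> nth 0 rs j \in nth [::] (col_insert_seq T (rev rs)) j) &
      s \in nth [::] (col_insert_seq T (rev rs)) (maxn (col_of T s) (size rs).+1).-1].
Proof.
elim: rs => [|x rs IH].
  move=> _; split => //=.
  exact: (col_of_mem Hs).
rewrite /= => /andP[Hrx Hp'].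
have [Hu HsU H3 H4] := IH (path_le ltz_trans Hrx Hp').
rewrite Tp_cons; set U := col_insert_seq T (rev rs) in Hu HsU H3 H4 *.
move: Hp'; rewrite rcons_path => /andP[Hpx Hls].
have Hrx' : r < x := Hrx.
have Hls' : last x rs < s := Hls.
have Hxl : x <= last x rs := path_last_le Hpx (mem_head _ _).
have Hent : forall e, e \in entries U -> e \in rs \/ (e <= r \/ s <= e).
  move=> e; rewrite (perm_mem (perm_Tp T rs)) mem_cat => /orP[->|He]; first by left.
  right; have := Hgap e He; rewrite negb_and -!leNgt => /orP[]; by [left|right].
have HxU : x \notin entries U.
  apply/negP => /Hent [H|[H|H]].
  - by have := path_mem_lt Hpx H; rewrite ltxx.
  - by have := lt_le_trans Hrx' H; rewrite ltxx.
  - by have := le_lt_trans H (le_lt_trans Hxl Hls'); rewrite ltxx.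
have H4C : forall e, e \in entries U -> e <= x \/ e \in rs \/ last x rs < e.
  move=> e /Hent [H|[H|H]]; [by right; left | left | right; right].
  - by apply: (le_trans H (ltW Hrx')).
  - by apply: lt_le_trans Hls' H.
have [C1 C2] := chainC Hpx HsU H3 H4C.
set l := size rs in C1 C2 H4 *.
set y := last x rs in C2 Hls' Hxl H4C *.
have Hyrs : forall e, e \in rs -> e <= y.
  move=> e He; have He' : e \in x :: rs by rewrite inE He orbT.
  exact: (path_last_le Hpx He').
have Hnth : forall t, nth [::] (col_insert x U) (l + t) = nth [::] (col_insert y (drop l U)) t.
  by move=> t; rewrite -C2 nth_drop.
have HsD : all (sorted ltz) (drop l U).
  by apply/allP => d Hd; apply: (allP HsU); apply: mem_drop Hd.
split.
- by rewrite (perm_uniq (entries_col_insert x U)) /= HxU.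
- by apply: sorted_insert => //=; rewrite HxU.
- move=> j; rewrite ltnS leq_eqVlt => /orP[/eqP ->|Hj]; last by apply: C1.
  have -> : nth 0 (x :: rs) l = y by rewrite /y /l (last_nth 0).
  rewrite -(addn0 l) Hnth; exact: mem_head_insert.
- set c := col_of T s in H4 *.
  have Hc : (0 < c)%N by [].
  have Hq : (l <= (maxn c l.+1).-1)%N by rewrite -subn1 leq_subRL ?leq_max ?ltnSn ?orbT // add1n leq_max ltnSn orbT.
  move: H4; rewrite -(subnKC Hq) -nth_drop.
  case ED : (drop l U) HsD Hnth => [|d0 D'] HsD Hnth; first by rewrite nth_nil.
  case: (leqP c l.+1) => Hcl.
  + rewrite /= subnn => /= Hsd0.
    have -> : (maxn c l.+2).-1 = (l + 1)%N by lia.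
    rewrite Hnth /=.
    case/andP: HsD => Hd0 _.
    have Hd0U : forall e, e \in d0 -> e \in entries U.
      by move=> e He; apply: (@mem_entries _ _ l); rewrite -(addn0 l) -nth_drop ED.
    have Hf : find (fun e => y < e) d0 = index s d0.
      apply: find_sorted => // e He Hes; rewrite -leNgt.
      case: (Hent e (Hd0U e He)) => [H|[H|H]].
      + by apply: Hyrs.
      + by apply: le_trans H (le_trans (ltW Hrx') Hxl).
      + by have := le_lt_trans H Hes; rewrite ltxx.
    rewrite Hf index_mem Hsd0 nth_index //.
    exact: mem_head_insert.
  + have Hm2 : maxn c l.+2 = c by apply/maxn_idPl.
    rewrite Hm2.
    have Ht : ((c.-1 - l) = (c.-1 - l.+1).+1)%N by lia.
    rewrite Ht => Hsd; rewrite /= in Hsd.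
    have Hq' : (c.-1 = l + (c.-1 - l.+1).+1)%N by lia.
    rewrite Hq' Hnth /=.
    case: ifP => Hi /=; last by [].
    set b0 := nth 0 d0 _.
    have Hyb : y < b0 by apply: find_lt_nth.
    have Hb0l : b0 \in nth [::] U l by rewrite -(addn0 l) -nth_drop ED /=; apply: mem_nth.
    have Hsq : s \in nth [::] U c.-1.
      by rewrite Hq' -nth_drop ED.
    have Hsb : s < b0.
      case: (Hent b0 (mem_entries Hb0l)) => [H|[H|H]].
      + by have := lt_le_trans Hyb (Hyrs _ H); rewrite ltxx.
      + by have := le_lt_trans H (lt_le_trans Hrx' (le_trans Hxl (ltW Hyb))); rewrite ltxx.
      + rewrite lt_neqAle H andbT; apply/eqP => Esb.
        have E1 := col_of_uniq Hu Hsq; rewrite Esb (col_of_uniq Hu Hb0l) in E1.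
        by case: E1 => E1; move: Hcl; rewrite /c /col_of -E1 ltnn.
    exact: posB.
Qed.

Unset Implicit Arguments.

Theorem lemma2p3 (T : tableau) (s r : int) (k : nat) (rs : seq int) :
  is_SYT T ->
  s \in entries T ->
  r < s ->
  (forall x, x \in entries T -> ~~ ((r < x) && (x < s))) ->
  (0 < k)%N ->
  (k%:Z <= s - r) ->
  size rs = k.-1 ->
  path (fun x y : int => x < y) r (rcons rs s) ->
  let T' := col_insert_seq T (rev rs) in
  let m := maxn (col_of T s) k in
  ((forall i : nat, (1 <= i <= k.-1)%N ->
      nth 0 rs i.-1 \in entries T' /\ col_of T' (nth 0 rs i.-1) = i)
   /\ col_of T' s = m)
  /\
  (forall s' : int, s' \in entries T -> s < s' ->
      let n := count (fun x => (s <= x) && (x < s')) (entries T) in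
      col_of T' s' = col_of T s' \/ (col_of T' s' <= m + n)%N).
Proof.
move=> HT Hs Hrs Hgap Hk Hkr Hsize Hpath T' m.
case: HT => _ _ Hsrt _ [Hu _].
have [Hu' _ H3 H4] := @inv1 T s r Hu Hsrt Hs Hgap rs Hpath.
have Hk1 : (size rs).+1 = k by rewrite Hsize; case: (k) Hk.
split; [split|].
- move=> i /andP[Hi1 Hi2].
  have Hj : (i.-1 < size rs)%N by rewrite Hsize; case: (i) Hi1 Hi2 => //= i'; case: (k) => //.
  have Hm := H3 _ Hj.
  split; first exact: (mem_entries Hm).
  by rewrite (col_of_uniq Hu' Hm); case: (i) Hi1.
- rewrite Hk1 in H4; rewrite (col_of_uniq Hu' H4) /m.
  by case E: (maxn (col_of T s) k) => //; move: E; rewrite /maxn; case: ifP => _ E; move: Hk; rewrite ?E //; move: E => /= ->.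
- move=> s' Hs' Hss' n.
  case: (@inv2 T s r s' Hgap rs Hpath Hs' Hss') => [H|H]; [left; exact: H | right].
  apply: (leq_trans H); rewrite /n leq_add2r Hk1 /m; exact: leq_maxr.
Qed.
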